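(* In the triangle $ABC$ with $a=8$, $b=15$, and $c=\sqrt{(353+15\sqrt{93})/2}$, the triangle center $X_{18}$ coincides with vertex $A$.
   Context: $X_n$ denotes the $n$-th triangle center listed in Kimberling's Encyclopedia of Triangle Centers (ETC) ($X_{18}$ the second Napoleon point), given by barycentric coordinates in terms of $a=BC$, $b=CA$, $c=AB$. *)

(* Defs.v *)
From Stdlib Require Import Reals.
Open Scope R_scope.

(* Homogeneous barycentric coordinates: a point is a nonzero triple up to
   a nonzero scalar. *)
Definition bary := (R * R * R)%type.

Definition bary_nonzero (p : bary) : Prop :=
  let '(x, y, z) := p in ~ (x = 0 /\ y = 0 /\ z = 0).

Definition same_point (p q : bary) : Prop :=
  bary_nonzero p /\ bary_nonzero q /\
  exists k : R, k <> 0 /\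
    let '(x, y, z) := p in let '(u, v, w) := q in
    x = k * u /\ y = k * v /\ z = k * w.

(* Conway notation: S = twice the area (Heron), S_A = (b^2+c^2-a^2)/2. *)
Definition twice_area (a b c : R) : R :=
  sqrt ((a + b + c) * (- a + b + c) * (a - b + c) * (a + b - c)) / 2.

Definition conwayS (a b c : R) : R := (b ^ 2 + c ^ 2 - a ^ 2) / 2.

(* X(18), second Napoleon point: trilinears csc(A - pi/6) : ..., i.e.
   barycentrics a csc(A - pi/6) = 2abc / (sqrt 3 * S - S_A) : ... .
   With f_A := sqrt 3 * S - S_A (and cyclically), we clear denominators and
   use the equivalent (and everywhere-defined) representative
   (f_B f_C : f_C f_A : f_A f_B). *)
Definition fX18 (a b c : R) : R := sqrt 3 * twice_area a b c - conwayS a b c.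

Definition X18 (a b c : R) : bary :=
  let fA := fX18 a b c in
  let fB := fX18 b c a in
  let fC := fX18 c a b in
  (fB * fC, fC * fA, fA * fB).

Definition vertexA : bary := (1, 0, 0).

(* Main.v *)
Require Import Defs.
From Stdlib Require Import Reals Lra Psatz.
Open Scope R_scope.

Theorem theorem4p2 :
  same_point (X18 8 15 (sqrt ((353 + 15 * sqrt 93) / 2))) vertexA.
Proof.
  set (t := sqrt 93).
  assert (Ht2 : t * t = 93) by (apply sqrt_sqrt; lra).
  assert (Ht0 : 0 <= t) by apply sqrt_pos.
  set (x := (353 + 15 * t) / 2).
  assert (Hx0 : 176 <= x) by (unfold x; lra).
  set (c := sqrt x).
  assert (Hc2 : c * c = x) by (apply sqrt_sqrt; lra).
  assert (HP : forall u v w, (u = 8 /\ v = 15 /\ w = c) \/ (u = 15 /\ v = c /\ w = 8)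
      \/ (u = c /\ v = 8 /\ w = 15) ->
      sqrt 3 * twice_area u v w = (161 + x) / 2).
  { intros u v w H.
    assert (E : (u + v + w) * (- u + v + w) * (u - v + w) * (u + v - w)
              = 28800 + 578 * (c * c) - 54721 - (c * c) * (c * c)).
    { destruct H as [[-> [-> ->]]|[[-> [-> ->]]|[-> [-> ->]]]]; ring. }
    unfold twice_area. rewrite E, Hc2.
    assert (Q : 3 * (28800 + 578 * x - 54721 - x * x) = (161 + x) * (161 + x)).
    { unfold x. nra. }
    assert (R3 : sqrt 3 * sqrt (28800 + 578 * x - 54721 - x * x) = 161 + x).
    { rewrite <- sqrt_mult_alt by lra. rewrite Q. apply sqrt_square. lra. }
    lra. }
  unfold X18, fX18, conwayS.
  rewrite (HP 8 15 c) by auto.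
  rewrite (HP 15 c 8) by auto.
  rewrite (HP c 8 15) by auto.
  replace (c ^ 2) with x by (simpl; lra).
  unfold same_point, bary_nonzero, vertexA.
  repeat split.
  - intros [H _]. nra.
  - intros [H _]. lra.
  - exists ((161 + x - (x - 161)) / 2 * ((161 + x - (289 - x)) / 2)).
    split; [nra|]. repeat split; try ring_simplify; try field; lra.
Qed.
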